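(* Let $T$ be a finite rooted tree, and let $\mathcal{H}(T)$ be the hypergraph on $V(T)$ whose hyperedges are, for each leaf $\ell$, the set of ancestors of $\ell$ (including $\ell$ itself). Then $\mathcal{H}(T)$ can be realized with the family $\mathcal{R}_{\rm SW}$ of all south-west quadrants: there is an injective map $\pi\colon V(T) \to \mathbb{R}^2$ such that for every leaf $\ell$ there is a south-west quadrant $Q$ with $\pi(V(T)) \cap Q$ equal to the image of the set of ancestors of $\ell$ (including $\ell$). Moreover, this can be done so that the root is the bottommost and leftmost point, and the children of each non-leaf vertex lie on a common line of slope $-1$.
   Context: South-west quadrants: $\mathcal{R}_{\rm SW} = \{\{(x,y) \in \mathbb{R}^2 : x \leq a,\ y \leq b\} : a,b \in \mathbb{R}\}$. *)

(* Defs.v *)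
From mathcomp Require Import all_boot.
From Stdlib Require Import Reals.
Set Implicit Arguments. Unset Strict Implicit.

Definition rooted_tree (T : finType) (r : T) (p : T -> T) : Prop :=
  p r = r /\ forall v : T, exists k : nat, iter k p v = r.

Definition ancestor (T : finType) (p : T -> T) (u v : T) : Prop :=
  exists k : nat, iter k p v = u.

Definition child (T : finType) (r : T) (p : T -> T) (u v : T) : Prop :=
  u <> r /\ p u = v.

Definition leaf (T : finType) (r : T) (p : T -> T) (v : T) : Prop :=
  forall u : T, ~ child r p u v.

Definition SW_quadrant (a b : R) : (R * R) -> Prop :=
  fun q => (q.1 <= a)%R /\ (q.2 <= b)%R.

(* Main.v *)
Require Import Defs.
From mathcomp Require Import all_boot.
From Stdlib Require Import Reals.
From Stdlib Require Import Lra.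

Lemma iter_root {T : finType} {r : T} {p : T -> T} :
  p r = r -> forall k, iter k p r = r.
Proof. move=> Hr; elim=> [|k IH] //=; by rewrite IH. Qed.

Lemma reachb {T : finType} {r : T} {p : T -> T}
  (H : forall v, exists k, iter k p v = r) v : exists k, iter k p v == r.
Proof. by case: (H v) => k Hk; exists k; apply/eqP. Qed.

Definition dep {T : finType} {r : T} {p : T -> T}
  (H : forall v, exists k, iter k p v = r) (v : T) : nat := ex_minn (reachb H v).

Lemma dep_iter_r {T : finType} {r : T} {p : T -> T}
  (H : forall v, exists k, iter k p v = r) v : iter (dep H v) p v = r.
Proof. rewrite /dep; case: ex_minnP => m /eqP Hm _; exact Hm. Qed.

Lemma dep_min {T : finType} {r : T} {p : T -> T}
  (H : forall v, exists k, iter k p v = r) v k : iter k p v = r -> (dep H v <= k)%N.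
Proof. move=> Hk; rewrite /dep; case: ex_minnP => m _ Hmin; apply Hmin; exact/eqP. Qed.

Lemma dep_r {T : finType} {r : T} {p : T -> T}
  (H : forall v, exists k, iter k p v = r) : dep H r = 0%N.
Proof. apply/eqP; rewrite -leqn0; exact: dep_min. Qed.

Lemma dep0 {T : finType} {r : T} {p : T -> T}
  (H : forall v, exists k, iter k p v = r) v : dep H v = 0%N -> v = r.
Proof. move=> E; have := dep_iter_r H v; by rewrite E. Qed.

Lemma dep_p {T : finType} {r : T} {p : T -> T} (Hr : p r = r)
  (H : forall v, exists k, iter k p v = r) v : v <> r -> dep H v = (dep H (p v)).+1.
Proof.
move=> Hv; apply/eqP; rewrite eqn_leq; apply/andP; split.
  apply: dep_min; rewrite iterSr; exact: dep_iter_r.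
case E: (dep H v) => [|m]; first by case: Hv; apply: (dep0 H).
rewrite ltnS; apply: dep_min; rewrite -iterSr -E; exact: dep_iter_r.
Qed.

Lemma dep_iter {T : finType} {r : T} {p : T -> T} (Hr : p r = r)
  (H : forall v, exists k, iter k p v = r) v k : dep H (iter k p v) = (dep H v - k)%N.
Proof.
elim: k => [|k IH]; first by rewrite subn0.
rewrite iterS subnS -IH; case: (eqVneq (iter k p v) r) => E.
  by rewrite E Hr dep_r.
by rewrite (dep_p Hr H (iter k p v)) //; apply/eqP.
Qed.

Local Open Scope R_scope.

Fixpoint Xs {T : Type} (p : T -> T) (f : T -> R) (t : R) (n : nat) (v : T) : R :=
  match n with 0%N => 0 | S n' => f v * t ^ n + Xs p f t n' (p v) end.

Definition co {T : finType} {r : T} {p : T -> T}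
  (H : forall v, exists k, iter k p v = r) (f : T -> R) (t : R) (v : T) : R :=
  Xs p f t (dep H v) v.

Lemma co_step {T : finType} {r : T} {p : T -> T} (Hr : p r = r)
  (H : forall v, exists k, iter k p v = r) f t v :
  v <> r -> co H f t v = f v * t ^ (dep H v) + co H f t (p v).
Proof. move=> Hv; by rewrite /co (dep_p Hr H _ Hv). Qed.

Lemma co_root {T : finType} {r : T} {p : T -> T}
  (H : forall v, exists k, iter k p v = r) f t : co H f t r = 0.
Proof. by rewrite /co dep_r. Qed.

Lemma co_nonneg {T : finType} {r : T} {p : T -> T}
  (H : forall v, exists k, iter k p v = r) f t :
  0 < t -> (forall v, 1 <= f v) -> forall v, 0 <= co H f t v.
Proof.
move=> ht hf v; rewrite /co; move: (dep H v) => n; elim: n v => [|n IH] v /=; first lra.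
have := IH (p v); have := hf v; have : 0 < t * t ^ n by have := pow_lt t n ht; nra. nra.
Qed.

Lemma co_mono {T : finType} {r : T} {p : T -> T} (Hr : p r = r)
  (H : forall v, exists k, iter k p v = r) f t :
  0 < t -> (forall v, 1 <= f v) -> forall v, co H f t (p v) <= co H f t v.
Proof.
move=> ht hf v; case: (eqVneq v r) => [->|/eqP Hv]; first by rewrite Hr; lra.
rewrite (co_step Hr H f t _ Hv); have := hf v; have := pow_lt t (dep H v) ht; nra.
Qed.

Lemma co_strict {T : finType} {r : T} {p : T -> T} (Hr : p r = r)
  (H : forall v, exists k, iter k p v = r) f t :
  0 < t -> (forall v, 1 <= f v) -> forall v, v <> r -> co H f t (p v) < co H f t v.
Proof.
move=> ht hf v Hv.
rewrite (co_step Hr H f t _ Hv); have := hf v; have := pow_lt t (dep H v) ht; nra.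
Qed.

Lemma co_phi {T : finType} {r : T} {p : T -> T} (Hr : p r = r)
  (H : forall v, exists k, iter k p v = r) f t :
  0 < t -> (forall v, 1 <= f v) -> (forall v, (f v + 1) * t <= 1) ->
  forall v, co H f t v + t ^ (dep H v) <= co H f t (p v) + t ^ (dep H (p v)).
Proof.
move=> ht hf hf1 v; case: (eqVneq v r) => [->|/eqP Hv]; first by rewrite Hr; lra.
rewrite (co_step Hr H f t _ Hv) (dep_p Hr H _ Hv) /=.
have := hf1 v; have := pow_lt t (dep H (p v)) ht; nra.
Qed.

Lemma co_anc_le {T : finType} {r : T} {p : T -> T} (Hr : p r = r)
  (H : forall v, exists k, iter k p v = r) f t :
  0 < t -> (forall v, 1 <= f v) -> forall k v, co H f t (iter k p v) <= co H f t v.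
Proof.
move=> ht hf; elim=> [|k IH] v; first by rewrite /=; lra.
rewrite iterSr; have := IH (p v); have := co_mono Hr H f t ht hf v; lra.
Qed.

Lemma co_anc_lt {T : finType} {r : T} {p : T -> T} (Hr : p r = r)
  (H : forall v, exists k, iter k p v = r) f t :
  0 < t -> (forall v, 1 <= f v) ->
  forall k v, iter k p v <> v -> co H f t (iter k p v) < co H f t v.
Proof.
move=> ht hf [|k] v Hk; first by case: Hk.
rewrite iterSr in Hk *.
case: (eqVneq v r) => [E|/eqP Hv].
  by case: Hk; rewrite E Hr iter_root.
have := co_anc_le Hr H f t ht hf k (p v); have := co_strict Hr H f t ht hf v Hv; lra.
Qed.

Lemma co_bound {T : finType} {r : T} {p : T -> T} (Hr : p r = r)
  (H : forall v, exists k, iter k p v = r) f t :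
  0 < t -> (forall v, 1 <= f v) -> (forall v, (f v + 1) * t <= 1) ->
  forall k v, co H f t v < co H f t (iter k p v) + t ^ (dep H (iter k p v)).
Proof.
move=> ht hf hf1 k v.
suff: co H f t v + t ^ (dep H v) <= co H f t (iter k p v) + t ^ (dep H (iter k p v)).
  have := pow_lt t (dep H v) ht; lra.
elim: k v => [|k IH] v; first by rewrite /=; lra.
rewrite iterSr; have := IH (p v); have := co_phi Hr H f t ht hf hf1 v; lra.
Qed.

Definition al {T : finType} (v : T) : R := INR (enum_rank v) + 1.
Definition be {T : finType} (v : T) : R := INR #|T| - INR (enum_rank v).
Definition tT (T : finType) : R := / (INR #|T| + 1).

Lemma tT_pos (T : finType) : 0 < tT T.
Proof. rewrite /tT; apply: Rinv_0_lt_compat; have := pos_INR #|T|; lra. Qed.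

Lemma rank_le {T : finType} (v : T) : INR (enum_rank v) + 1 <= INR #|T|.
Proof. rewrite -S_INR; apply: le_INR; apply/leP; exact: ltn_ord. Qed.

Lemma al_ge1 {T : finType} (v : T) : 1 <= al v.
Proof. rewrite /al; have := pos_INR (enum_rank v); lra. Qed.

Lemma be_ge1 {T : finType} (v : T) : 1 <= be v.
Proof. rewrite /be; have := rank_le v; lra. Qed.

Lemma mul_inv_le1 a M : 0 < M -> a <= M -> a * / M <= 1.
Proof.
move=> hM ha; rewrite -(Rinv_r M); last lra.
apply: Rmult_le_compat_r => //; left; exact: Rinv_0_lt_compat.
Qed.

Lemma al_t {T : finType} (v : T) : (al v + 1) * tT T <= 1.
Proof.
apply: mul_inv_le1; first (have := pos_INR #|T|; lra).
rewrite /al; have := rank_le v; lra.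
Qed.

Lemma be_t {T : finType} (v : T) : (be v + 1) * tT T <= 1.
Proof.
apply: mul_inv_le1; first (have := pos_INR #|T|; lra).
rewrite /be; have := pos_INR (enum_rank v); lra.
Qed.

Lemma rank_lt {T : finType} (u v : T) :
  ltn (enum_rank u) (enum_rank v) -> INR (enum_rank u) + 1 <= INR (enum_rank v).
Proof. move=> h; rewrite -S_INR; apply: le_INR; exact/leP. Qed.

Lemma sib_lt {T : finType} {r : T} {p : T -> T} (Hr : p r = r)
  (H : forall v, exists k, iter k p v = r) u v :
  ltn (enum_rank u) (enum_rank v) -> u <> r -> v <> r -> p u = p v ->
  forall k1 k2 w1 w2, iter k1 p w1 = u -> iter k2 p w2 = v ->
  co H al (tT T) w1 < co H al (tT T) w2 /\ co H be (tT T) w2 < co H be (tT T) w1.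
Proof.
move=> hlt hu hv hp k1 k2 w1 w2 e1 e2.
have ht := tT_pos T.
have hd : dep H u = dep H v by rewrite (dep_p Hr H _ hu) (dep_p Hr H _ hv) hp.
have hrk := rank_lt u v hlt.
have hpow := pow_lt (tT T) (dep H v) ht.
split.
- have := co_bound Hr H al _ ht al_ge1 al_t k1 w1; rewrite e1 hd => A.
  have := co_anc_le Hr H al _ ht al_ge1 k2 w2; rewrite e2 => B.
  rewrite (co_step Hr H _ _ _ hu) (co_step Hr H _ _ _ hv) hp hd in A B.
  have h2 : al u + 1 <= al v by rewrite /al; lra.
  have := Rmult_le_compat_r _ _ _ (Rlt_le _ _ hpow) h2; lra.
- have := co_bound Hr H be _ ht be_ge1 be_t k2 w2; rewrite e2 => A.
  have := co_anc_le Hr H be _ ht be_ge1 k1 w1; rewrite e1 => B.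
  rewrite (co_step Hr H _ _ _ hu) (co_step Hr H _ _ _ hv) hp hd in A B.
  have h2 : be v + 1 <= be u by rewrite /be; lra.
  have := Rmult_le_compat_r _ _ _ (Rlt_le _ _ hpow) h2; lra.
Qed.

Definition sepR {T : finType} {r : T} {p : T -> T}
  (H : forall v, exists k, iter k p v = r) (w1 w2 : T) : Prop :=
  (co H al (tT T) w1 < co H al (tT T) w2 /\ co H be (tT T) w2 < co H be (tT T) w1) \/
  (co H al (tT T) w2 < co H al (tT T) w1 /\ co H be (tT T) w1 < co H be (tT T) w2).

Lemma sep_depth {T : finType} {r : T} {p : T -> T} (Hr : p r = r)
  (H : forall v, exists k, iter k p v = r) n :
  forall u v, dep H u = n -> dep H v = n -> u <> v ->
  forall k1 k2 w1 w2, iter k1 p w1 = u -> iter k2 p w2 = v -> sepR H w1 w2.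
Proof.
elim: n => [|n IH] u v du dv huv k1 k2 w1 w2 e1 e2.
  by case: huv; rewrite (dep0 H u du) (dep0 H v dv).
have hu : u <> r by move=> E; move: du; rewrite E dep_r.
have hv : v <> r by move=> E; move: dv; rewrite E dep_r.
case: (eqVneq (p u) (p v)) => [hp|/eqP hp].
  have hrk : enum_rank u <> enum_rank v by move/enum_rank_inj.
  case: (ltngtP (enum_rank u) (enum_rank v)) => [h|h|h].
  - left; exact: (sib_lt Hr H u v h hu hv hp k1 k2 w1 w2 e1 e2).
  - right; exact: (sib_lt Hr H v u h hv hu (esym hp) k2 k1 w2 w1 e2 e1).
  - by case: hrk; apply: val_inj.
apply: (IH (p u) (p v) _ _ hp k1.+1 k2.+1).
- by move: du; rewrite (dep_p Hr H _ hu) => -[].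
- by move: dv; rewrite (dep_p Hr H _ hv) => -[].
- by rewrite iterS e1.
- by rewrite iterS e2.
Qed.

Lemma trich_aux {T : finType} {r : T} {p : T -> T} (Hr : p r = r)
  (H : forall v, exists k, iter k p v = r) u v :
  leq (dep H v) (dep H u) ->
  (exists k, iter k p u = v) \/ sepR H u v.
Proof.
move=> hle.
set u' := iter (subn (dep H u) (dep H v)) p u.
have hd : dep H u' = dep H v by rewrite /u' (dep_iter Hr) subKn.
case: (eqVneq u' v) => [E|/eqP hne]; first by left; exists (subn (dep H u) (dep H v)).
right; exact: (sep_depth Hr H _ u' v hd erefl hne (subn (dep H u) (dep H v)) 0 u v erefl erefl).
Qed.

Lemma trich {T : finType} {r : T} {p : T -> T} (Hr : p r = r)
  (H : forall v, exists k, iter k p v = r) u v :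
  (exists k, iter k p u = v) \/ (exists k, iter k p v = u) \/ sepR H u v.
Proof.
case: (leqP (dep H v) (dep H u)) => h.
  case: (trich_aux Hr H u v h) => ?; tauto.
case: (trich_aux Hr H v u (ltnW h)) => [?|[?|?]]; first tauto; right; right; rewrite /sepR; tauto.
Qed.

Theorem lemma4 (T : finType) (r : T) (p : T -> T) :
  rooted_tree r p ->
  exists pi : T -> (R * R),
    injective pi /\
    (forall l : T, leaf r p l ->
       exists a b : R, forall v : T,
         SW_quadrant a b (pi v) <-> ancestor p v l) /\
    (forall v : T, ((pi r).1 <= (pi v).1)%R /\ ((pi r).2 <= (pi v).2)%R) /\
    (forall v : T, ~ leaf r p v ->
       exists c : R, forall u : T, child r p u v -> ((pi u).1 + (pi u).2 = c)%R).
Proof.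
move=> [Hr H].
have ht := tT_pos T.
exists (fun v => (co H al (tT T) v, co H be (tT T) v)).
split; [|split; [|split]].
- move=> u v [E1 E2].
  case: (eqVneq u v) => // /eqP huv.
  case: (trich Hr H u v) => [[k hk]|[[k hk]|hs]].
  + have := co_anc_lt Hr H al _ ht al_ge1 k u; rewrite hk => A.
    have := A (fun e => huv (esym e)); lra.
  + have := co_anc_lt Hr H al _ ht al_ge1 k v; rewrite hk => A.
    have := A huv; lra.
  + rewrite /sepR in hs; lra.
- move=> l _; exists (co H al (tT T) l), (co H be (tT T) l) => v.
  rewrite /SW_quadrant /ancestor /=; split.
  + move=> [h1 h2].
    case: (trich Hr H v l) => [[k hk]|[[k hk]|hs]].
    * case: (eqVneq l v) => [->|/eqP hne]; first by exists O.
      have := co_anc_lt Hr H al _ ht al_ge1 k v; rewrite hk => A.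
      have := A (fun e => hne e); lra.
    * by exists k.
    * rewrite /sepR in hs; lra.
  + move=> [k <-]; split.
    * exact: co_anc_le Hr H al _ ht al_ge1 k l.
    * exact: co_anc_le Hr H be _ ht be_ge1 k l.
- move=> v /=; rewrite !co_root; split.
  + exact: co_nonneg H al _ ht al_ge1 v.
  + exact: co_nonneg H be _ ht be_ge1 v.
- move=> v _.
  exists (co H al (tT T) v + co H be (tT T) v + (INR #|T| + 1) * tT T ^ (dep H v).+1).
  move=> u [hu <-] /=.
  rewrite (co_step Hr H al _ _ hu) (co_step Hr H be _ _ hu) (dep_p Hr H _ hu) /al /be.
  simpl pow. set X := INR (enum_rank u). set Y := INR #|T|. set Z := tT T ^ _. set C1 := co _ _ _ _. set C2 := co _ _ _ _. clearbody X Y Z C1 C2. ring.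
Qed.
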